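(* Let $m\ge 1$ and let \[ A=\begin{pmatrix} D & p\\ q^{T} & \delta\end{pmatrix}\in\mathbb{C}^{(m+1)\times(m+1)}, \] where $D=\operatorname{diag}(d_1,\ldots,d_m)$, $p,q\in\mathbb{C}^m$, $\delta\in\mathbb{C}$, and suppose $A$ is similar to $\Lambda=\operatorname{diag}(\lambda_1,\ldots,\lambda_{m+1})$, where the numbers $d_1,\ldots,d_m,\lambda_1,\ldots,\lambda_{m+1}$ are pairwise distinct. Define \[ Z^{-1}=\begin{bmatrix}-\operatorname{diag}(p)\operatorname{Cauchy}(D,\Lambda)\\ \mathbf{ones}\end{bmatrix},\qquad \Pi=-\operatorname{Cauchy}(\Lambda,D)\operatorname{diag}(q)\operatorname{diag}(p)\operatorname{Cauchy}(D,\Lambda)+\mathbf{ones}, \] where in $Z^{-1}$ the symbol $\mathbf{ones}$ is the $1\times(m+1)$ row of ones and in $\Pi$ it is the $(m+1)\times(m+1)$ all-ones matrix. Then $\Pi$ is diagonal, with $\Pi_{ij}=0$ for $i\ne j$ and \[ \Pi_{jj}=1+\sum_{i=1}^m\frac{p_iq_i}{(\lambda_j-d_i)^2}=1-\sum_{i=1}^m\frac{\prod_{k=1}^{m+1}(d_i-\lambda_k)}{(\lambda_j-d_i)^2\prod_{k\ne i}(d_i-d_k)} \] (so $\Pi$ depends only on the $d_i$ and $\lambda_j$, not on $p,q$); the matrix $Z^{-1}$ is invertible with inverse \[ Z=\Pi^{-1}\bigl[\operatorname{Cauchy}(\Lambda,D)\operatorname{diag}(q),\ \mathbf{ones}\bigr]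 \] (here $\mathbf{ones}$ is the $(m+1)\times 1$ column of ones), and $A=Z^{-1}\Lambda Z$.
   Context: For diagonal matrices $D=\operatorname{diag}(d_1,\ldots,d_m)$ and $\Lambda=\operatorname{diag}(\lambda_1,\ldots,\lambda_{m+1})$ with $d_i\neq\lambda_j$, $\operatorname{Cauchy}(D,\Lambda)$ is the $m\times(m+1)$ matrix with entries $\operatorname{Cauchy}(D,\Lambda)_{ij}=(d_i-\lambda_j)^{-1}$, and $\operatorname{Cauchy}(\Lambda,D)$ is the $(m+1)\times m$ matrix with entries $(\lambda_i-d_j)^{-1}$. For a vector $v$, $\operatorname{diag}(v)$ is the diagonal matrix with diagonal $v$. $\mathbf{ones}$ denotes an array all of whose entries are $1$, of the shape indicated. *)

(* Defs.v *)
From HB Require Import structures.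
From mathcomp Require Import all_boot all_order all_algebra.
Set Implicit Arguments. Unset Strict Implicit. Unset Printing Implicit Defensive.
Import Order.TTheory GRing.Theory Num.Theory.
Local Open Scope ring_scope.

(* Cauchy(X, Y) for diagonal X = diag(x), Y = diag(y): entries (x_i - y_j)^-1 *)
Definition cauchy (F : fieldType) (a b : nat) (x : 'rV[F]_a) (y : 'rV[F]_b)
  : 'M[F]_(a, b) := \matrix_(i < a, j < b) (x 0 i - y 0 j)^-1.

Definition arrow_mx (F : fieldType) (m : nat) (d : 'rV[F]_m) (p q : 'cV[F]_m)
  (delta : F) : 'M[F]_(m + 1) :=
  block_mx (diag_mx d) p q^T delta%:M.

Definition Zinv_mx (F : fieldType) (m : nat) (d : 'rV[F]_m) (lam : 'rV[F]_(m + 1))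
  (p : 'cV[F]_m) : 'M[F]_(m + 1) :=
  col_mx (- (diag_mx p^T *m cauchy d lam)) (const_mx 1).

Definition Pi_mx (F : fieldType) (m : nat) (d : 'rV[F]_m) (lam : 'rV[F]_(m + 1))
  (p q : 'cV[F]_m) : 'M[F]_(m + 1) :=
  - (cauchy lam d *m diag_mx q^T *m diag_mx p^T *m cauchy d lam) + const_mx 1.

Definition Z_mx (F : fieldType) (m : nat) (d : 'rV[F]_m) (lam : 'rV[F]_(m + 1))
  (p q : 'cV[F]_m) : 'M[F]_(m + 1) :=
  invmx (Pi_mx d lam p q) *m row_mx (cauchy lam d *m diag_mx q^T) (const_mx 1).

(* Main.v *)
Require Import Defs.
From HB Require Import structures.
From mathcomp Require Import all_boot all_order all_algebra.
Set Implicit Arguments. Unset Strict Implicit. Unset Printing Implicit Defensive.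
Import Order.TTheory GRing.Theory Num.Theory.
Local Open Scope ring_scope.
From mathcomp Require Import ring.
Lemma eig_rows_unit (F : fieldType) n (g M : 'M[F]_n) (a : 'rV[F]_n) :
  injective (fun j => a 0 j) -> M *m g = diag_mx a *m M ->
  (forall j, row j M != 0) -> M \in unitmx.
Proof.
move=> inja eqM nz.
have eig j : (row j M <= eigenspace g (a 0 j))%MS.
  apply/eigenspaceP; rewrite -row_mul eqM mul_diag_mx.
  by apply/rowP => k; rewrite !mxE.
have dx := @mxdirect_sum_eigenspace F _ n g predT (fun j => a 0 j) (in2W inja).
apply: contraT => nu; rewrite unitmxE unitfE negbK in nu.
case/det0P: nu => u nzu uM0.
have [j uj] : exists j, u 0 j != 0.
  apply/existsP; apply: contraR nzu; rewrite negb_exists => /forallP H.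
  by apply/eqP/rowP => k; rewrite !mxE; apply/eqP; rewrite -[_ == _]negbK H.
move/mxdirect_sumsP: dx => /(_ j isT) cap0.
have : (u 0 j *: row j M <= eigenspace g (a 0 j) :&:
          \sum_(k | predT k && (k != j)) eigenspace g (a 0 k))%MS.
  rewrite sub_capmx scalemx_sub //=.
  have -> : u 0 j *: row j M = - \sum_(k | predT k && (k != j)) u 0 k *: row k M.
    apply/eqP; rewrite -addr_eq0; apply/eqP.
    by rewrite -(bigD1 j (P := predT)) //= -mulmx_sum_row.
  rewrite (eqmx_opp _); apply: summx_sub_sums => k _.
  by rewrite scalemx_sub.
rewrite cap0 submx0 scaler_eq0 (negbTE uj) /=.
by rewrite (negbTE (nz j)).
Qed.
Lemma secular (F : fieldType) m (d : 'rV[F]_m) (lam : 'rV[F]_(m+1)) (p q : 'cV[F]_m) delta :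
 (forall i j, d 0 i != lam 0 j) ->
 (exists P : 'M[F]_(m+1), P \in unitmx /\ arrow_mx d p q delta = invmx P *m diag_mx lam *m P) ->
 forall j, \sum_i p i 0 * q i 0 / (lam 0 j - d 0 i) = lam 0 j - delta.
Proof.
move=> hdl [P [uP hA]] j.
set a := lam 0 j.
pose v : 'rV[F]_(m+1) := delta_mx 0 j *m P.
have nzv : v != 0.
  apply: contraTneq isT => v0.
  have : v *m invmx P = 0 by rewrite v0 mul0mx.
  rewrite /v mulmxK // => /matrixP /(_ 0 j); rewrite !mxE !eqxx /=.
  by move/eqP; rewrite oner_eq0.
have hv : v *m arrow_mx d p q delta = a *: v.
  rewrite hA /v !mulmxA mulmxK //.
  have -> : delta_mx 0 j *m diag_mx lam = a *: delta_mx (0 : 'I_1) j.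
    rewrite mul_mx_diag; apply/matrixP => r k; rewrite !mxE.
    by rewrite ord1 eqxx /=; case: eqP => [->|_]; rewrite ?mulr1 ?mul1r ?mulr0 ?mul0r.
  by rewrite scalemxAl.
rewrite -(hsubmxK v) in hv nzv.
move: (lsubmx v) (rsubmx v) hv nzv => x t hv nzv.
rewrite /arrow_mx mul_row_block scale_row_mx in hv.
case/eq_row_mx: hv => h1 h2.
have ex i : x 0 i * d 0 i + t 0 0 * q i 0 = a * x 0 i.
  move: h1; rewrite mul_mx_diag => /matrixP /(_ 0 i); rewrite !mxE big_ord1 !mxE => <-; done.
have eb : \sum_i x 0 i * p i 0 + t 0 0 * delta = a * t 0 0.
  move/matrixP: h2 => /(_ 0 0); rewrite !mxE big_ord1 !mxE.
  by rewrite mulr1n => <-.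
have nzt : t 0 0 != 0.
  apply: contraNneq nzv => t0.
  have x0 : x = 0.
    apply/rowP => i; rewrite mxE.
    have := ex i; rewrite t0 mul0r addr0 => /eqP.
    rewrite eq_sym -subr_eq0 [a * _]mulrC -mulrBr mulf_eq0 => /orP[/eqP //|].
    by rewrite subr_eq0 eq_sym (negbTE (hdl i j)).
  have t00 : t = 0 by apply/rowP => k; rewrite ord1 t0 mxE.
  by rewrite x0 t00 row_mx0.
have xi i : x 0 i = t 0 0 * q i 0 / (a - d 0 i).
  have nz : a - d 0 i != 0 by rewrite subr_eq0 eq_sym hdl.
  apply: (mulIf nz); rewrite mulfVK //.
  apply/eqP; rewrite -subr_eq0; apply/eqP.
  transitivity (a * x 0 i - (x 0 i * d 0 i + t 0 0 * q i 0)); first ring.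
  by rewrite ex subrr.
have eb' : t 0 0 * (a - delta) = \sum_i x 0 i * p i 0.
  by rewrite -[RHS](addrK (t 0 0 * delta)) eb; ring.
apply: (mulfI nzt); rewrite eb' mulr_sumr; apply: eq_bigr => i _.
by rewrite xi; ring.
Qed.
Lemma size_prodX (F : fieldType) n (e : 'I_n -> F) :
  size (\prod_(k < n) ('X - (e k)%:P)) = n.+1.
Proof. by rewrite size_prod_XsubC [index_enum _]unlock -enumT -cardT card_ord. Qed.

Lemma char_id (F : fieldType) m (d : 'rV[F]_m) (lam : 'rV[F]_(m+1)) (c : 'I_m -> F) (delta : F) :
 injective (fun j => lam 0 j) -> (forall i j, d 0 i != lam 0 j) ->
 (forall j, \sum_i c i / (lam 0 j - d 0 i) = lam 0 j - delta) ->
 forall i, c i * \prod_(k | k != i) (d 0 i - d 0 k) = - \prod_k (d 0 i - lam 0 k).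
Proof.
move=> hl hdl hs i0.
pose Pd := \prod_(k < m) ('X - (d 0 k)%:P).
pose Q i := \prod_(k < m | k != i) ('X - (d 0 k)%:P).
pose L := \prod_(k < m + 1) ('X - (lam 0 k)%:P).
pose g := ('X - delta%:P) * Pd - \sum_i c i *: Q i.
have PdQ i : Pd = ('X - (d 0 i)%:P) * Q i by rewrite /Pd (bigD1 i).
have sPd : size Pd = m.+1 by rewrite size_prodX.
have sL : size L = m.+2 by rewrite size_prodX addn1.
have mPd : Pd \is monic by apply: monic_prod_XsubC.
have mL : L \is monic by apply: monic_prod_XsubC.
have mQ i : Q i \is monic by apply: monic_prod_XsubC.
have sQ i : size (Q i) = m.
  have := sPd; rewrite (PdQ i) size_monicM ?monicXsubC ?monic_neq0 //.
  by rewrite size_XsubC /= => [[]].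
have mG1 : ('X - delta%:P) * Pd \is monic by rewrite monicMl ?monicXsubC.
have sG1 : size (('X - delta%:P) * Pd) = m.+2.
  by rewrite size_monicM ?monicXsubC ?monic_neq0 // size_XsubC sPd.
have hsz : (size (g - L)%R <= m.+1)%N.
  have -> : g - L = (('X - delta%:P) * Pd - L) - \sum_i c i *: Q i by rewrite /g; ring.
  apply: leq_trans (size_polyD _ _) _; rewrite size_polyN geq_max; apply/andP; split.
    apply/leq_sizeP => j hj; rewrite coefB.
    case: (ltngtP j m.+1) => [|jm|->]; first by rewrite ltnNge hj.
      by rewrite !nth_default ?subrr // ?sG1 ?sL.
    move/monicP: mG1; move/monicP: mL; rewrite !lead_coefE sG1 sL /= => -> ->.
    by rewrite subrr.
  apply: leq_trans (size_sum _ _ _) _; apply/bigmax_leqP => i _.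
  by apply: leq_trans (size_scale_leq _ _) _; rewrite sQ.
have hroots j : root (g - L) (lam 0 j).
  rewrite rootE /g !hornerE horner_sum.
  have -> : L.[lam 0 j] = 0.
    by rewrite /L horner_prod (bigD1 j) //= hornerXsubC subrr mul0r.
  have hQ i : (Q i).[lam 0 j] = Pd.[lam 0 j] / (lam 0 j - d 0 i).
    have nz : lam 0 j - d 0 i != 0 by rewrite subr_eq0 eq_sym hdl.
    by rewrite (PdQ i) hornerM hornerXsubC mulrAC divff // mul1r.
  under eq_bigr do rewrite hornerZ hQ.
  have -> : \sum_i c i * (Pd.[lam 0 j] / (lam 0 j - d 0 i)) =
            Pd.[lam 0 j] * \sum_i c i / (lam 0 j - d 0 i).
    by rewrite mulr_sumr; apply: eq_bigr => i _; ring.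
  by rewrite hs; apply/eqP; ring.
have hp (I : finType) (P : pred I) (e : I -> F) x :
  (\prod_(k | P k) ('X - (e k)%:P)).[x] = \prod_(k | P k) (x - e k).
  by rewrite horner_prod; apply: eq_bigr => k _; rewrite hornerXsubC.
have g0 : g - L = 0.
  apply/eqP; apply: contraT => nz.
  have := max_poly_roots nz (rs := [seq lam 0 j | j <- enum 'I_(m + 1)]).
  rewrite size_map size_enum_ord.
  have -> : all (root (g - L)) [seq lam 0 j | j <- enum 'I_(m + 1)].
    by apply/allP => x /mapP [j _ ->].
  rewrite map_inj_uniq ?enum_uniq //.
  by move=> /(_ isT isT); rewrite addn1 ltnNge hsz.
have := congr1 (fun P => P.[d 0 i0]) g0.
rewrite /= /g !hornerE horner_sum.
have -> : Pd.[d 0 i0] = 0 by rewrite (PdQ i0) hornerM hornerXsubC subrr mul0r.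
rewrite (bigD1 i0) //= big1; last first.
  move=> k nk; rewrite hornerZ /Q horner_prod (bigD1 i0) 1?eq_sym //=.
  by rewrite hornerXsubC subrr mul0r mulr0.
have e1 : (Q i0).[d 0 i0] = \prod_(k | k != i0) (d 0 i0 - d 0 k) by rewrite /Q hp.
have e2 : L.[d 0 i0] = \prod_k (d 0 i0 - lam 0 k) by rewrite /L hp.
rewrite hornerZ e1 e2.
move/eqP; rewrite mulr0 addr0 sub0r -opprD oppr_eq0 => /eqP H.
by apply/eqP; rewrite -addr_eq0 H.
Qed.
Section Blocks.
Variables (F : fieldType) (m : nat) (d : 'rV[F]_m) (lam : 'rV[F]_(m+1)) (p q : 'cV[F]_m) (delta : F).
Hypothesis hdl : forall i j, d 0 i != lam 0 j.
Hypothesis hs : forall j, \sum_i p i 0 * q i 0 / (lam 0 j - d 0 i) = lam 0 j - delta.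

Definition Wmx : 'M[F]_(m+1) := row_mx (cauchy lam d *m diag_mx q^T) (const_mx 1).

Lemma AZ : arrow_mx d p q delta *m Zinv_mx d lam p = Zinv_mx d lam p *m diag_mx lam.
Proof.
rewrite /arrow_mx /Zinv_mx mul_block_col mul_col_mx mulmxN !mul_diag_mx !mul_mx_diag.
congr col_mx; apply/matrixP => i j; rewrite !mxE.
  rewrite big_ord1 !mxE; rewrite -?[ord0]/(0 : 'I_1).
  have nz : d 0 i - lam 0 j != 0 by rewrite subr_eq0 hdl.
  by field.
rewrite (ord1 i) big_ord1 !mxE eqxx mulr1n mulr1 mul1r.
rewrite -(addrNK delta (lam 0 j)) -hs; congr (_ + _).
apply: eq_bigr => k _; rewrite !mxE.
have nz : d 0 k - lam 0 j != 0 by rewrite subr_eq0 hdl.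
have nz' : lam 0 j - d 0 k != 0 by rewrite subr_eq0 eq_sym hdl.
by rewrite -[d 0 k - _]opprB invrN; ring.
Qed.

Lemma WA : Wmx *m arrow_mx d p q delta = diag_mx lam *m Wmx.
Proof.
rewrite /arrow_mx /Wmx mul_row_block mul_mx_row !mul_diag_mx !mul_mx_diag.
congr row_mx; apply/matrixP => i j; rewrite !mxE.
  rewrite big_ord1 !mxE; rewrite -?[ord0]/(0 : 'I_1).
  have nz : lam 0 i - d 0 j != 0 by rewrite subr_eq0 eq_sym hdl.
  by field.
rewrite (ord1 j) big_ord1 !mxE eqxx mulr1n mulr1 ?mul1r.
rewrite -(addrNK delta (lam 0 i)) -hs; congr (_ + _).
apply: eq_bigr => k _; rewrite !mxE.
by ring.
Qed.

Lemma WZ : Wmx *m Zinv_mx d lam p = Pi_mx d lam p q.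
Proof.
rewrite /Wmx /Zinv_mx /Pi_mx mul_row_col mulmxN !mulmxA.
congr (_ + _); apply/matrixP => i j; rewrite !mxE big_ord1 !mxE; rewrite -?[ord0]/(0 : 'I_1) mulr1 //.
Qed.

Lemma Pi_entry i j : Pi_mx d lam p q i j =
  1 + \sum_k p k 0 * q k 0 / ((lam 0 i - d 0 k) * (lam 0 j - d 0 k)).
Proof.
rewrite /Pi_mx !mul_mx_diag !mxE addrC; congr (_ + _).
rewrite -sumrN; apply: eq_bigr => k _; rewrite !mxE.
have nz : d 0 k - lam 0 j != 0 by rewrite subr_eq0 hdl.
have nz' : lam 0 j - d 0 k != 0 by rewrite subr_eq0 eq_sym hdl.
have nz2 : lam 0 i - d 0 k != 0 by rewrite subr_eq0 eq_sym hdl.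
by rewrite -[d 0 k - _]opprB invrN invfM; ring.
Qed.

End Blocks.

Lemma cancel_mid (F : fieldType) (x y z : F) : y != 0 -> x * y / (z * y) = x / z.
Proof. by move=> hy; rewrite invfM [z^-1 * _]mulrC mulrA mulfK. Qed.

Theorem mainTheorem2 (C : numClosedFieldType) (m : nat) (hm : (0 < m)%N)
  (d : 'rV[C]_m) (lam : 'rV[C]_(m + 1)) (p q : 'cV[C]_m) (delta : C)
  (hd : injective (fun i : 'I_m => d 0 i))
  (hlam : injective (fun j : 'I_(m + 1) => lam 0 j))
  (hdlam : forall (i : 'I_m) (j : 'I_(m + 1)), d 0 i != lam 0 j)
  (hsim : exists P : 'M[C]_(m + 1),
            P \in unitmx /\ arrow_mx d p q delta = invmx P *m diag_mx lam *m P) :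
  let Pi := Pi_mx d lam p q in
  let Zinv := Zinv_mx d lam p in
  let Z := Z_mx d lam p q in
  [/\ (forall i j : 'I_(m + 1), i != j -> Pi i j = 0),
      (forall j : 'I_(m + 1),
         Pi j j = 1 + \sum_(i < m) p i 0 * q i 0 / (lam 0 j - d 0 i) ^+ 2
         /\ Pi j j = 1 - \sum_(i < m)
              (\prod_(k < m + 1) (d 0 i - lam 0 k))
              / ((lam 0 j - d 0 i) ^+ 2 * \prod_(k < m | k != i) (d 0 i - d 0 k))),
      Pi \in unitmx,
      Zinv \in unitmx /\ invmx Zinv = Z
    & arrow_mx d p q delta = Zinv *m diag_mx lam *m Z].
Proof.
move=> Pi Zinv Z.
have hs := secular hdlam hsim.
have hAZ := AZ hdlam hs.
have hWA := WA hdlam hs.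
set A := arrow_mx d p q delta in hAZ hWA *.
set W := Wmx d lam q in hWA.
have {}hAZ : A *m Zinv = Zinv *m diag_mx lam := hAZ.
have hZu : Zinv \in unitmx.
  rewrite -unitmx_tr; apply: (@eig_rows_unit _ _ A^T _ lam hlam).
    by rewrite -trmx_mul hAZ trmx_mul tr_diag_mx.
  move=> j; apply/eqP => /matrixP /(_ 0 (rshift m 0)).
  rewrite !mxE /Zinv /Zinv_mx; case: splitP => [k /= hk|k _].
    by have := ltn_ord k; rewrite -hk addn0 ltnn.
  by rewrite mxE => /eqP; rewrite oner_eq0.
have hWu : W \in unitmx.
  apply: (@eig_rows_unit _ _ A W lam hlam hWA) => j.
  apply/eqP => /matrixP /(_ 0 (rshift m 0)).
  rewrite !mxE /W /Wmx; case: splitP => [k /= hk|k _].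
    by have := ltn_ord k; rewrite -hk addn0 ltnn.
  by rewrite mxE => /eqP; rewrite oner_eq0.
have hPi : Pi = W *m Zinv by rewrite /W WZ.
have hPu : Pi \in unitmx by rewrite hPi unitmx_mul hWu hZu.
have hcomm : diag_mx lam *m Pi = Pi *m diag_mx lam.
  by rewrite hPi mulmxA -hWA -[W *m A *m Zinv]mulmxA hAZ mulmxA.
have hZZ : Z *m Zinv = 1%:M.
  change (invmx Pi *m W *m Zinv = 1%:M).
  by rewrite -mulmxA -hPi mulVmx.
have hinv : invmx Zinv = Z.
  by rewrite -[invmx Zinv]mul1mx -hZZ mulmxK.
split => //.
- move=> i j nij; have := congr1 (fun M : 'M[C]_(m + 1) => M i j) hcomm.
  rewrite /= mul_diag_mx mul_mx_diag !mxE => /eqP.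
  rewrite -subr_eq0 [lam 0 i * _]mulrC -mulrBr mulf_eq0 subr_eq0.
  case/orP => [/eqP // | /eqP e].
  by move: nij; rewrite (hlam _ _ e) eqxx.
- move=> j; rewrite /Pi (Pi_entry _ _ hdlam); split.
    by congr (1 + _); apply: eq_bigr => i _; rewrite expr2.
  rewrite -sumrN; congr (1 + _); apply: eq_bigr => i _.
  have hc := char_id (c := fun i => p i 0 * q i 0) hlam hdlam hs i.
  rewrite -mulNr -hc /= expr2 cancel_mid //.
  apply/prodf_neq0 => k nki; rewrite subr_eq0.
  by apply: contra nki => /eqP e; rewrite (hd _ _ e).
- by rewrite -hinv -hAZ mulmxK.
Qed.
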